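(* For every fixed $\omega\in\Omega_0^*\cap\Omega_1^*$ and all real numbers $M,a,b$ with $M>0$ and $1/\alpha<a<b<1$, one has (with the convention $0/0=0$) $$\sup_{(u_1,u_2,v)\in[-M;M]^2\times[a;b]}\left\{\frac{|\ddot X(u_1,v,\omega)-\ddot X(u_2,v,\omega)|}{|u_1-u_2|^{v-1/\alpha}}\right\}<\infty.$$
   Context: Fix $\alpha\in(1,2)$. Let $Z_\alpha(ds)$ be an independently scattered symmetric $\alpha$-stable random measure on $\mathbb{R}$ with Lebesgue control measure on $(\Omega,\mathcal{F},\mathbb{P})$. For $x,\kappa\in\mathbb{R}$, $(x)_+^\kappa=x^\kappa$ if $x>0$ and $0$ otherwise. Let $\psi$ be a three times continuously differentiable compactly supported Daubechies mother wavelet generating an orthonormal basis of $L^2(\mathbb{R})$. For $(x,v)\in\mathbb{R}\times(1/\alpha;1)$, $\Psi(x,v)=\int_{\mathbb{R}}(x-s)_+^{v-1/\alpha}\psi(s)\,ds$; for $(j,k)\in\mathbb{Z}^2$, $\epsilon_{j,k}=2^{j/\alpha}\int_{\mathbb{R}}\psi(2^js-k)Z_\alpha(ds)$. $\Omega_0^*$ is an event of probability $1$ such that for every $\eta>0$ there is a positive finite random variable $C_\eta$ with $|\epsilon_{j,k}(\omega)|\le C_\eta(\omega)(3+|j|)^{1/\alpha+\eta}(3+|k|)^{1/\alpha+\eta}$ for all $\omega\in\Omega_0^*$, $(j,k)\in\mathbb{Z}^2$. $\Omega_1^*$ is an event of probability $1$ such that for every $l>0$ there is a positive finite random variable $C'_l$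 with $|\epsilon_{j,k}(\omega)|\le C'_l(\omega)2^{j/\alpha}$ for all $\omega\in\Omega_1^*$ and all $(j,k)\in\mathbb{Z}_+\times\mathbb{Z}$ with $|k|2^{-j}\le l$ (both events exist). The high frequency part $\ddot X$ is defined on $\Omega_0^*$, for $(u,v)\in\mathbb{R}\times(1/\alpha;1)$, by $\ddot X(u,v)=\sum_{j=0}^{\infty}\sum_{k\in\mathbb{Z}}2^{-jv}\epsilon_{j,k}\big(\Psi(2^ju-k,v)-\Psi(-k,v)\big)$ (series converging on $\Omega_0^*$ uniformly on compact subsets of $\mathbb{R}\times(1/\alpha;1)$). One may use that $\Psi$ and $\partial_x\Psi$ are continuous and satisfy $\sup_{(x,v)\in\mathbb{R}\times[a;b]}(3+|x|)^2(|\Psi(x,v)|+|\partial_x\Psi(x,v)|)<\infty$ for every compact $[a;b]\subset(1/\alpha;1)$. *)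

(* Defs.v *)
From Stdlib Require Import Reals Lra ZArith.
Open Scope R_scope.

(* Sum over k in Z, taken as the limit of symmetric partial sums
   f 0 + (f 1 + f (-1)) + (f 2 + f (-2)) + ... *)
Definition zsum_is (f : Z -> R) (l : R) : Prop :=
  infinite_sum
    (fun n : nat => if Nat.eqb n 0 then f 0%Z
                    else f (Z.of_nat n) + f (- Z.of_nat n)%Z) l.

(* The high-frequency part  Xdd(u,v) = sum_{j>=0} sum_{k in Z}
   2^{-jv} eps_{j,k} (Psi(2^j u - k, v) - Psi(-k, v)),
   as the relation "x is the value of the double series". *)
Definition inner_term (eps : Z -> Z -> R) (Psi : R -> R -> R)
  (u v : R) (j : nat) (k : Z) : R :=
  Rpower 2 (- (INR j) * v) * eps (Z.of_nat j) k *
  (Psi (Rpower 2 (INR j) * u - IZR k) v - Psi (- IZR k) v).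

Definition Xdd_is (eps : Z -> Z -> R) (Psi : R -> R -> R)
  (u v x : R) : Prop :=
  exists s : nat -> R,
    (forall j : nat, zsum_is (inner_term eps Psi u v j) (s j)) /\
    infinite_sum s x.

(* The almost-sure bound defining Omega_0^* (evaluated at a fixed omega). *)
Definition Omega0_bound (alpha : R) (eps : Z -> Z -> R) : Prop :=
  forall eta : R, 0 < eta ->
    exists C : R, 0 < C /\
      forall j k : Z,
        Rabs (eps j k) <=
          C * Rpower (3 + Rabs (IZR j)) (1 / alpha + eta)
            * Rpower (3 + Rabs (IZR k)) (1 / alpha + eta).

(* The almost-sure bound defining Omega_1^* (evaluated at a fixed omega). *)
Definition Omega1_bound (alpha : R) (eps : Z -> Z -> R) : Prop :=
  forall l : R, 0 < l ->
    exists C : R, 0 < C /\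
      forall (j : nat) (k : Z),
        Rabs (IZR k) * Rpower 2 (- INR j) <= l ->
        Rabs (eps (Z.of_nat j) k) <= C * Rpower 2 (INR j / alpha).

Definition Psi_props (alpha : R) (Psi dPsi : R -> R -> R) : Prop :=
  (forall x v, 1 / alpha < v < 1 ->
     derivable_pt_lim (fun y => Psi y v) x (dPsi x v)) /\
  (forall x v, 1 / alpha < v < 1 ->
     forall e, 0 < e -> exists d, 0 < d /\
       forall x' v', 1 / alpha < v' < 1 -> Rabs (x' - x) < d -> Rabs (v' - v) < d ->
         Rabs (Psi x' v' - Psi x v) < e /\ Rabs (dPsi x' v' - dPsi x v) < e) /\
  (forall a b, 1 / alpha < a -> a <= b -> b < 1 ->
     exists K, forall x v, a <= v <= b ->
       (3 + Rabs x) ^ 2 * (Rabs (Psi x v) + Rabs (dPsi x v)) <= K).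

(* Main.v *)
Require Import Defs.
From Stdlib Require Import Reals Lra ZArith.
From Coquelicot Require Import Coquelicot.
Open Scope R_scope.


Lemma lim_abs_le (u : nat -> R) l B :
  Un_cv u l -> (forall n, Rabs (u n) <= B) -> Rabs l <= B.
Proof.
  intros Hu Hb. destruct (Rle_dec (Rabs l) B) as [h|h]; auto.
  exfalso. destruct (Hu (Rabs l - B)) as [N HN]; [lra|].
  specialize (HN N (le_n N)). unfold R_dist in HN. specialize (Hb N).
  assert (Rabs l <= Rabs (u N) + Rabs (u N - l)).
  { replace l with (u N - (u N - l)) at 1 by ring.
    eapply Rle_trans; [apply Rabs_triang|]. rewrite Rabs_Ropp. lra. }
  lra.
Qed.

Lemma abs_conv (g d : nat -> R) B :
  (forall n, Rabs (g n) <= d n) -> (forall N, sum_f_R0 d N <= B) ->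
  infinite_sum g (Series g) /\ Rabs (Series g) <= B.
Proof.
  intros Hg Hd.
  assert (HB : forall N, sum_f_R0 (fun n => Rabs (g n)) N <= B).
  { intro N. eapply Rle_trans; [|apply (Hd N)]. apply sum_Rle. intros; auto. }
  destruct (growing_cv (fun N => sum_f_R0 (fun n => Rabs (g n)) N)) as [l0 Hl0].
  { intro n. simpl. pose proof (Rabs_pos (g (S n))). lra. }
  { exists B. intros x [N ->]. auto. }
  assert (Hex : ex_series g).
  { apply ex_series_Rabs. exists l0. apply is_series_Reals. exact Hl0. }
  split.
  - apply is_series_Reals. apply Series_correct. exact Hex.
  - apply (lim_abs_le (fun N => sum_f_R0 g N)).
    + pose proof (Series_correct g Hex) as H. apply is_series_Reals in H. exact H.
    + intro n. eapply Rle_trans; [apply sum_f_R0_triangle|]. auto.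
Qed.

Definition gZ (f : Z -> R) (n : nat) : R :=
  if Nat.eqb n 0 then f 0%Z else f (Z.of_nat n) + f (- Z.of_nat n)%Z.

Lemma zsum_gZ f l : zsum_is f l <-> infinite_sum (gZ f) l.
Proof. reflexivity. Qed.

Lemma gZ_le f g : (forall k, f k <= g k) -> forall n, gZ f n <= gZ g n.
Proof. intros H n. unfold gZ. destruct (Nat.eqb n 0); auto. apply Rplus_le_compat; auto. Qed.

Lemma gZ_abs f n : Rabs (gZ f n) <= gZ (fun k => Rabs (f k)) n.
Proof. unfold gZ. destruct (Nat.eqb n 0). lra. apply Rabs_triang. Qed.

Lemma gZ_minus f g n : gZ f n - gZ g n = gZ (fun k => f k - g k) n.
Proof. unfold gZ. destruct (Nat.eqb n 0); ring. Qed.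

Lemma gZ_split f h (F : nat -> R) n :
  (forall m : nat, f (Z.of_nat m) <= h (Z.of_nat m) + F m /\
                   f (- Z.of_nat m)%Z <= h (- Z.of_nat m)%Z + F m) ->
  (forall m, 0 <= F m) ->
  gZ f n <= gZ h n + 2 * F n.
Proof.
  intros H HF. unfold gZ. destruct (Nat.eqb_spec n 0) as [->|_].
  - destruct (H 0%nat) as [H1 _]. simpl in H1. specialize (HF 0%nat). lra.
  - destruct (H n) as [H1 H2]. lra.
Qed.

Lemma telescope f (Phi : R -> R) :
  (forall k, f k <= Phi (IZR k + 1) - Phi (IZR k)) ->
  forall N, sum_f_R0 (gZ f) N <= Phi (INR N + 1) - Phi (- INR N).
Proof.
  intros H N. induction N as [|N IH].
  - simpl. unfold gZ. simpl. specialize (H 0%Z). simpl in H.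
    replace (-0) with 0 by ring. exact H.
  - simpl sum_f_R0. unfold gZ at 2. simpl Nat.eqb. cbv iota.
    pose proof (H (Z.of_nat (S N))) as H1. pose proof (H (- Z.of_nat (S N))%Z) as H2.
    rewrite opp_IZR in H2. rewrite <- INR_IZR_INZ in H1, H2.
    rewrite S_INR in *.
    replace (- (INR N + 1) + 1) with (- INR N) in H2 by ring.
    lra.
Qed.


Definition Gf (t : R) : R := t / (2 + Rabs t).

Lemma Gf_bound t : Rabs (Gf t) <= 1.
Proof.
  unfold Gf. pose proof (Rabs_pos t).
  rewrite Rabs_div by lra. rewrite (Rabs_right (2 + Rabs t)) by lra.
  apply Rmult_le_reg_r with (2 + Rabs t); [lra|].
  unfold Rdiv. rewrite Rmult_assoc, Rinv_l by lra. lra.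
Qed.

Lemma Gf_step t : / (3 + Rabs t) ^ 2 <= (Gf (t + 1) - Gf t) / 2.
Proof.
  unfold Gf. destruct (Rle_dec 0 t).
  - rewrite (Rabs_right t) by lra. rewrite (Rabs_right (t+1)) by lra.
    replace (((t + 1) / (2 + (t + 1)) - t / (2 + t)) / 2) with (/ ((3+t)*(2+t))) by (field; lra).
    apply Rinv_le_contravar; nra.
  - destruct (Rle_dec (t+1) 0).
    + rewrite (Rabs_left1 t) by lra. rewrite (Rabs_left1 (t+1)) by lra.
      replace (((t + 1) / (2 + - (t + 1)) - t / (2 + - t)) / 2) with (/ ((1-t)*(2-t))) by (field; lra).
      apply Rinv_le_contravar; nra.
    + rewrite (Rabs_left1 t) by lra. rewrite (Rabs_right (t+1)) by lra.
      replace (((t + 1) / (2 + (t + 1)) - t / (2 + - t)) / 2) with ((1 - t - t*t) / ((3+t)*(2-t))) by (field; lra).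
      apply Rle_trans with (/ ((3+t)*(2-t))).
      * apply Rinv_le_contravar; nra.
      * unfold Rdiv. rewrite <- (Rmult_1_l (/ ((3+t)*(2-t)))) at 1.
        apply Rmult_le_compat_r. apply Rlt_le, Rinv_0_lt_compat; nra. nra.
Qed.

Lemma near_sum (y : R) N :
  sum_f_R0 (gZ (fun k => / (3 + Rabs (y - IZR k)) ^ 2)) N <= 1.
Proof.
  eapply Rle_trans.
  - apply (telescope _ (fun x => Gf (x - y) / 2)).
    intro k. replace (IZR k + 1 - y) with ((IZR k - y) + 1) by ring.
    rewrite <- Rabs_Ropp. replace (- (y - IZR k)) with (IZR k - y) by ring.
    pose proof (Gf_step (IZR k - y)). lra.
  - pose proof (Gf_bound (INR N + 1 - y)). pose proof (Gf_bound (- INR N - y)).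
    apply Rabs_le_between in H. apply Rabs_le_between in H0. lra.
Qed.


Lemma ln_le_sub1 z : 0 < z -> ln z <= z - 1.
Proof. intro. pose proof (exp_ineq1_le (ln z)). rewrite exp_ln in H0; lra. Qed.

Lemma key_far q x : 0 < q -> 3 <= x ->
  Rpower x (-q-1) <= / q * (Rpower (x-1) (-q) - Rpower x (-q)).
Proof.
  intros Hq Hx. unfold Rpower.
  set (A := exp (- q * ln x)).
  assert (HA : 0 < A) by apply exp_pos.
  assert (E1 : exp ((-q-1) * ln x) = A / x).
  { replace ((-q-1) * ln x) with (- q * ln x + - ln x) by ring.
    rewrite exp_plus, exp_Ropp, exp_ln by lra. reflexivity. }
  assert (E2 : exp (- q * ln (x-1)) = A * exp (q * (ln x - ln (x-1)))).
  { unfold A. rewrite <- exp_plus. f_equal. ring. }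
  assert (L : 1 / x <= ln x - ln (x-1)).
  { pose proof (ln_le_sub1 ((x-1)/x)). unfold Rdiv in H. rewrite ln_mult, ln_Rinv in H by (try apply Rinv_0_lt_compat; lra).
    assert ((x-1)*/x - 1 = - (1/x)) by (field; lra).
    assert (0 < (x-1)*/x) by (apply Rmult_lt_0_compat; [lra| apply Rinv_0_lt_compat; lra]).
    specialize (H H1). lra. }
  pose proof (exp_ineq1_le (q * (ln x - ln (x-1)))).
  rewrite E1, E2.
  assert (A / x = /q * (A * (q * (1 / x)))) by (field; lra).
  rewrite H0. apply Rmult_le_compat_l. left; apply Rinv_0_lt_compat; lra.
  assert (q * (1/x) <= q * (ln x - ln (x-1))) by (apply Rmult_le_compat_l; lra).
  nra.
Qed.

Lemma Rpower_neg_anti q a b : 0 <= q -> 0 < a <= b -> Rpower b (-q) <= Rpower a (-q).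
Proof.
  intros. rewrite !Rpower_Ropp. apply Rinv_le_contravar.
  unfold Rpower; apply exp_pos. apply Rle_Rpower_l; lra.
Qed.

Definition farT (L q : R) (n : nat) : R :=
  if Rle_dec (INR n) L then 0 else Rpower (3 + INR n) (-q-1).

Lemma far_sum L q : 0 <= L -> 0 < q -> forall N,
  sum_f_R0 (farT L q) N <= / q * Rpower (2 + L) (-q).
Proof.
  intros HL Hq.
  assert (Inv : forall N, sum_f_R0 (farT L q) N <=
     / q * Rmax 0 (Rpower (2+L) (-q) - Rpower (3 + INR N) (-q))).
  { induction N as [|N IH].
    - simpl. unfold farT. destruct (Rle_dec (INR 0) L) as [_|h]; [|simpl in h; lra].
      apply Rmult_le_pos. left; apply Rinv_0_lt_compat; lra. apply Rmax_l.
    - simpl sum_f_R0. unfold farT at 2. rewrite S_INR.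
      destruct (Rle_dec (INR N + 1) L) as [h|h].
      + rewrite Rplus_0_r. eapply Rle_trans; [exact IH|].
        apply Rmult_le_compat_l. left; apply Rinv_0_lt_compat; lra.
        apply Rle_max_compat_l.
        pose proof (Rpower_neg_anti q (3 + INR N) (3 + (INR N + 1))).
        pose proof (pos_INR N). lra.
      + pose proof (pos_INR N).
        pose proof (Rpower_neg_anti q (2+L) (3 + INR N)) as Hm.
        rewrite Rmax_right in IH by lra.
        pose proof (key_far q (3 + (INR N + 1)) Hq) as K.
        replace (3 + (INR N + 1) - 1) with (3 + INR N) in K by ring.
        assert (Hm2 : Rpower (3 + (INR N + 1)) (-q) <= Rpower (2+L) (-q)).
        { apply Rpower_neg_anti; lra. }
        rewrite Rmax_right by lra.
        assert (IH' := IH). specialize (K ltac:(lra)).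
        assert (/ q * (Rpower (2 + L) (- q) - Rpower (3 + INR N) (- q)) +
          / q * (Rpower (3 + INR N) (- q) - Rpower (3 + (INR N + 1)) (- q)) =
          / q * (Rpower (2 + L) (- q) - Rpower (3 + (INR N + 1)) (- q))) by ring.
        lra. }
  intro N. eapply Rle_trans; [apply Inv|]. apply Rmult_le_compat_l.
  left; apply Rinv_0_lt_compat; lra.
  apply Rmax_lub. left; unfold Rpower; apply exp_pos.
  assert (0 < Rpower (3 + INR N) (-q)) by (unfold Rpower; apply exp_pos). lra.
Qed.


Lemma G2 (Z : nat -> R) q Y (c : nat -> bool) :
  0 < q < 1 -> Z 0%nat = 1 -> (forall n, Z (S n) = q * Z n) -> (forall n, 0 <= Z n) ->
  (forall n, c n = true -> Z n < Y) -> 0 <= Y ->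
  forall N, sum_f_R0 (fun n => if c n then Z n else 0) N <= Y / (1 - q).
Proof.
  intros Hq H0 HS Hpos Hc HY0.
  assert (Inv : forall N, sum_f_R0 (fun n => if c n then Z n else 0) N <=
                          Rmax 0 ((Y - q * Z N) / (1 - q))).
  { induction N as [|N IH].
    - simpl. destruct (c 0%nat) eqn:E.
      + pose proof (Hc _ E). rewrite H0 in *. apply Rle_trans with ((Y - q * 1) / (1 - q)); [|apply Rmax_r].
        apply Rmult_le_reg_r with (1 - q); [lra|]. unfold Rdiv. rewrite Rmult_assoc, Rinv_l by lra. lra.
      + apply Rmax_l.
    - simpl sum_f_R0. rewrite HS. destruct (c (S N)) eqn:E.
      + pose proof (Hc _ E) as HY. rewrite HS in HY.
        rewrite Rmax_right in IH.
        2:{ apply Rmult_le_pos; [lra|]. left; apply Rinv_0_lt_compat; lra. }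
        eapply Rle_trans; [|apply Rmax_r].
        assert ((Y - q * Z N) / (1 - q) + q * Z N = (Y - q * (q * Z N)) / (1 - q)) by (field; lra).
        lra.
      + rewrite Rplus_0_r. eapply Rle_trans; [exact IH|]. apply Rle_max_compat_l.
        unfold Rdiv. apply Rmult_le_compat_r. left; apply Rinv_0_lt_compat; lra.
        pose proof (Hpos N). assert (0 <= q * Z N * (1-q)) by (apply Rmult_le_pos; [apply Rmult_le_pos|]; lra). nra. }
  intro N. eapply Rle_trans; [apply Inv|]. apply Rmax_lub.
  - apply Rmult_le_pos; [lra|]. left; apply Rinv_0_lt_compat; lra.
  - unfold Rdiv. apply Rmult_le_compat_r. left; apply Rinv_0_lt_compat; lra.
    pose proof (Hpos N). assert (0 <= q * Z N) by (apply Rmult_le_pos; lra). lra.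
Qed.

Lemma G1 (Rs : nat -> R) r Y (c : nat -> bool) :
  1 < r -> (forall n, Rs (S n) = r * Rs n) -> (forall n, 0 <= Rs n) ->
  (forall n, c n = true -> Rs n <= Y) -> 0 <= Y ->
  forall N, sum_f_R0 (fun n => if c n then Rs n else 0) N <= Y * (r / (r - 1)).
Proof.
  intros Hr HS Hpos Hc HY0.
  assert (Hk : 1 <= r / (r-1)).
  { apply Rmult_le_reg_r with (r-1); [lra|]. unfold Rdiv. rewrite Rmult_assoc, Rinv_l by lra. lra. }
  assert (Inv : forall N, sum_f_R0 (fun n => if c n then Rs n else 0) N <=
                          Rmin (Rs N) Y * (r / (r - 1))).
  { induction N as [|N IH].
    - simpl. destruct (c 0%nat) eqn:E.
      + pose proof (Hc _ E). rewrite Rmin_left by lra. pose proof (Hpos 0%nat). nra.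
      + apply Rmult_le_pos; [apply Rmin_glb; auto|lra].
    - simpl sum_f_R0. destruct (c (S N)) eqn:E.
      + pose proof (Hc _ E) as HY. rewrite (Rmin_left (Rs (S N))) by lra.
        assert (Rmin (Rs N) Y <= Rs N) by apply Rmin_l.
        assert (Rmin (Rs N) Y * (r / (r-1)) <= Rs N * (r / (r-1))) by (apply Rmult_le_compat_r; lra).
        rewrite HS in *.
        assert (Rs N * (r / (r - 1)) + r * Rs N = r * Rs N * (r / (r - 1))) by (field; lra).
        lra.
      + rewrite Rplus_0_r. eapply Rle_trans; [exact IH|]. apply Rmult_le_compat_r; [lra|].
        apply Rle_min_compat_r. rewrite HS. pose proof (Hpos N). nra. }
  intro N. eapply Rle_trans; [apply Inv|]. apply Rmult_le_compat_r; [lra|]. apply Rmin_r.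
Qed.


Lemma Rpower_pos x y : 0 < Rpower x y.
Proof. unfold Rpower; apply exp_pos. Qed.

Lemma sqrt2_ge : 4/3 <= Rpower 2 (/2).
Proof.
  assert (H : Rpower 2 (/2) * Rpower 2 (/2) = 2).
  { rewrite <- Rpower_plus. replace (/2 + /2) with 1 by field. apply Rpower_1; lra. }
  pose proof (Rpower_pos 2 (/2)). nra.
Qed.

Lemma lin_exp (j : nat) : 3 + INR j <= 4 * Rpower 2 (INR j / 2).
Proof.
  induction j as [|j IH].
  - simpl. replace (0/2) with 0 by field. rewrite Rpower_O by lra. lra.
  - rewrite S_INR. replace ((INR j + 1)/2) with (INR j / 2 + /2) by field.
    rewrite Rpower_plus. pose proof sqrt2_ge. pose proof (Rpower_pos 2 (INR j / 2)).
    pose proof (pos_INR j). nra.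
Qed.

Lemma sum_gZ_scal c f N :
  sum_f_R0 (gZ (fun k => c * f k)) N = c * sum_f_R0 (gZ f) N.
Proof.
  induction N as [|N IH]; simpl; unfold gZ; simpl.
  - ring.
  - fold (gZ (fun k => c * f k)). fold (gZ f). rewrite IH. ring.
Qed.

Lemma sum_plus_le (f g h : nat -> R) N :
  (forall n, f n <= g n + h n) -> sum_f_R0 f N <= sum_f_R0 g N + sum_f_R0 h N.
Proof.
  intro H. induction N as [|N IH]; simpl. apply H. pose proof (H (S N)). lra.
Qed.

Lemma sum_scal (c : R) (f : nat -> R) N :
  sum_f_R0 (fun n => c * f n) N = c * sum_f_R0 f N.
Proof. induction N as [|N IH]; simpl. ring. rewrite IH. ring. Qed.

Lemma inner_bound alpha eps M :
  1 < alpha < 2 -> Omega0_bound alpha eps -> Omega1_bound alpha eps -> 0 < M ->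
  exists A, 0 <= A /\ forall (j : nat) (y : R),
    Rabs y <= Rpower 2 (INR j) * M -> forall N,
    sum_f_R0 (gZ (fun k => Rabs (eps (Z.of_nat j) k) / (3 + Rabs (y - IZR k)) ^ 2)) N
      <= A * Rpower 2 (INR j / alpha).
Proof.
  intros Ha H0 H1 HM.
  assert (Hia : 1/2 < 1/alpha < 1).
  { unfold Rdiv; rewrite !Rmult_1_l. split.
    - apply Rinv_lt_contravar; lra.
    - rewrite <- Rinv_1. apply Rinv_lt_contravar; lra. }
  set (q := (1 - 1/alpha)/2).
  assert (Hq : 0 < q < 1/4) by (unfold q; lra).
  destruct (H1 (M+1) ltac:(lra)) as [C1 [HC1 HB1]].
  destruct (H0 q ltac:(lra)) as [C0 [HC0 HB0]].
  set (p := 1/alpha + q).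
  assert (Hp : p = 1 - q) by (unfold p, q; field; lra).
  exists (C1 + 8 * C0 * (M+1)^2 / q). split.
  { assert (0 <= 8 * C0 * (M+1)^2 / q). { unfold Rdiv. apply Rmult_le_pos. nra. left; apply Rinv_0_lt_compat; lra. } lra. }
  intros j y Hy N.
  set (P := Rpower 2 (INR j)). fold P in Hy.
  assert (HP : 1 <= P).
  { unfold P. rewrite <- (Rpower_O 2) by lra. apply Rle_Rpower. lra. apply pos_INR. }
  set (L := (M+1) * P).
  set (Cf := C0 * (3 + INR j) * (M+1)^2).
  set (E := Rpower 2 (INR j / alpha)).
  assert (HE : 0 < E) by apply Rpower_pos.
  assert (PW : forall (k : Z) (n : nat), Rabs (IZR k) = INR n ->
     Rabs (eps (Z.of_nat j) k) / (3 + Rabs (y - IZR k)) ^ 2 <=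
     C1 * E * / (3 + Rabs (y - IZR k)) ^ 2 + Cf * farT L q n).
  { intros k n Hk.
    assert (Hd : 0 < 3 + Rabs (y - IZR k)) by (pose proof (Rabs_pos (y - IZR k)); lra).
    assert (Hfar0 : 0 <= Cf * farT L q n).
    { unfold farT, Cf. destruct (Rle_dec (INR n) L). nra.
      pose proof (Rpower_pos (3 + INR n) (-q-1)). pose proof (pos_INR j).
      apply Rmult_le_pos; [|lra]. apply Rmult_le_pos; [|nra]. nra. }
    unfold farT. destruct (Rle_dec (INR n) L) as [hn|hn].
    - assert (He : Rabs (eps (Z.of_nat j) k) <= C1 * E).
      { apply HB1. rewrite Hk, Rpower_Ropp. fold P.
        apply Rmult_le_reg_r with P; [lra|]. rewrite Rmult_assoc, Rinv_l by lra. unfold L in hn. lra. }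
      unfold Rdiv. rewrite Rmult_0_r, Rplus_0_r.
      apply Rmult_le_compat_r; [left; apply Rinv_0_lt_compat; nra|exact He].
    - apply Rnot_le_lt in hn.
      pose proof (pos_INR n) as Hn0. pose proof (pos_INR j) as Hj0.
      assert (He := HB0 (Z.of_nat j) k). rewrite <- INR_IZR_INZ, (Rabs_right (INR j)) in He by lra.
      rewrite Hk in He. fold p in He.
      assert (Hpj : Rpower (3 + INR j) p <= 3 + INR j).
      { rewrite <- (Rpower_1 (3 + INR j)) at 2 by lra. apply Rle_Rpower; lra. }
      assert (Hyk : (3 + INR n) / (M+1) <= 3 + Rabs (y - IZR k)).
      { assert (Rabs (IZR k) <= Rabs y + Rabs (y - IZR k)).
        { replace (IZR k) with (y - (y - IZR k)) at 1 by ring.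
          eapply Rle_trans; [apply Rabs_triang|]. rewrite Rabs_Ropp. lra. }
        assert (INR n - P * M <= Rabs (y - IZR k))  by lra.
        unfold L in hn.
        apply Rmult_le_reg_r with (M+1); [lra|]. unfold Rdiv. rewrite Rmult_assoc, Rinv_l by lra.
        assert (0 <= (Rabs (y - IZR k) - (INR n - P * M)) * (M+1)) by (apply Rmult_le_pos; lra).
        assert (M * ((M+1) * P) <= M * INR n) by (apply Rmult_le_compat_l; lra).
        nra. }
      assert (Hinv : / (3 + Rabs (y - IZR k)) ^ 2 <= (M+1)^2 * / (3 + INR n)^2).
      { rewrite <- (Rinv_inv ((M+1)^2)). rewrite <- Rinv_mult.
        assert (0 < (3 + INR n) / (M+1)) by (apply Rdiv_lt_0_compat; lra).
        apply Rinv_le_contravar.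
        { replace (/ (M+1)^2 * (3 + INR n)^2) with (((3 + INR n) / (M+1))^2) by (field; lra). apply pow_lt; lra. }
        replace (/ (M+1)^2 * (3 + INR n)^2) with (((3 + INR n) / (M+1))^2) by (field; lra).
        apply pow_incr. lra. }
      assert (Hpw : Rpower (3 + INR n) p * / (3 + INR n)^2 = Rpower (3 + INR n) (-q-1)).
      { replace (-q-1) with (p + - INR 2) by (rewrite Hp; simpl; ring).
        rewrite Rpower_plus, Rpower_Ropp, Rpower_pow by lra. reflexivity. }
      pose proof (Rpower_pos (3 + INR j) p). pose proof (Rpower_pos (3 + INR n) p).
      assert (H3 : 0 <= Rabs (eps (Z.of_nat j) k)) by apply Rabs_pos.
      unfold Rdiv.
      apply Rle_trans with (C0 * (3 + INR j) * Rpower (3 + INR n) p * ((M+1)^2 * / (3 + INR n)^2)).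
      + apply Rmult_le_compat; [lra| left; apply Rinv_0_lt_compat; nra | |exact Hinv].
        eapply Rle_trans; [exact He|]. apply Rmult_le_compat_r; [lra|]. apply Rmult_le_compat_l; lra.
      + assert (0 <= C1 * E * / (3 + Rabs (y - IZR k)) ^ 2).
        { apply Rmult_le_pos; [nra|left; apply Rinv_0_lt_compat; nra]. }
        rewrite <- Hpw. unfold Cf. apply Req_le in Hpw.
        assert (C0 * (3 + INR j) * Rpower (3 + INR n) p * ((M + 1) ^ 2 * / (3 + INR n) ^ 2)
          = C0 * (3 + INR j) * (M + 1) ^ 2 * (Rpower (3 + INR n) p * / (3 + INR n) ^ 2)) by ring.
        lra. }
  eapply Rle_trans.
  { apply sum_plus_le with (g := gZ (fun k => C1 * E * / (3 + Rabs (y - IZR k)) ^ 2))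
                           (h := fun n => 2 * (Cf * farT L q n)).
    intro n. apply (gZ_split _ _ (fun m => Cf * farT L q m)).
    - intro m. split; apply PW.
      + rewrite <- INR_IZR_INZ. apply Rabs_right. apply Rle_ge, pos_INR.
      + rewrite opp_IZR, Rabs_Ropp, <- INR_IZR_INZ. apply Rabs_right. apply Rle_ge, pos_INR.
    - intro m. unfold farT, Cf. pose proof (pos_INR j). destruct (Rle_dec (INR m) L). nra.
      pose proof (Rpower_pos (3 + INR m) (-q-1)).
      apply Rmult_le_pos; [|lra]. apply Rmult_le_pos; [|nra]. nra. }
  rewrite sum_gZ_scal, sum_scal, sum_scal.
  pose proof (near_sum y N) as Hn.
  assert (HL : 0 <= L) by (unfold L; nra).
  pose proof (far_sum L q HL ltac:(lra) N) as Hf.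
  assert (HCf : 0 <= Cf) by (unfold Cf; pose proof (pos_INR j); apply Rmult_le_pos; [apply Rmult_le_pos|apply pow_le]; lra).
  assert (Hs1 : C1 * E * sum_f_R0 (gZ (fun k : Z => / (3 + Rabs (y - IZR k)) ^ 2)) N <= C1 * E).
  { rewrite <- (Rmult_1_r (C1 * E)) at 2. apply Rmult_le_compat_l; nra. }
  assert (Hs2 : 2 * (Cf * sum_f_R0 (farT L q) N) <= 2 * Cf * / q * Rpower (2 + L) (-q)).
  { assert (Cf * sum_f_R0 (farT L q) N <= Cf * (/ q * Rpower (2 + L) (- q))) by (apply Rmult_le_compat_l; lra).
    lra. }
  assert (Hs3 : Rpower (2 + L) (-q) <= Rpower 2 (- (q * INR j))).
  { rewrite Ropp_mult_distr_l, Rmult_comm, <- Rpower_mult. fold P.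
    apply Rpower_neg_anti; [lra|]. split; [lra|]. unfold L. nra. }
  assert (Hs4 : (3 + INR j) * Rpower 2 (- (q * INR j)) <= 4 * E).
  { eapply Rle_trans. apply Rmult_le_compat_r. left; apply Rpower_pos. apply lin_exp.
    rewrite Rmult_assoc, <- Rpower_plus. apply Rmult_le_compat_l; [lra|].
    unfold E. apply Rle_Rpower; [lra|]. pose proof (pos_INR j).
    unfold Rdiv. assert (INR j * /2 <= INR j * / alpha).
    { apply Rmult_le_compat_l; [lra|]. apply Rinv_le_contravar; lra. }
    nra. }
  assert (Hq' : 0 < / q) by (apply Rinv_0_lt_compat; lra).
  assert (Hfin : 2 * Cf * / q * Rpower (2 + L) (-q) <= 8 * C0 * (M+1)^2 / q * E).
  { unfold Cf. apply Rle_trans with (2 * C0 * (M+1)^2 * /q * ((3 + INR j) * Rpower 2 (- (q * INR j)))).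
    - assert (0 <= 2 * C0 * (M+1)^2 * /q * (3 + INR j)).
      { pose proof (pos_INR j). apply Rmult_le_pos; [|lra]. apply Rmult_le_pos; [|lra]. nra. }
      replace (2 * (C0 * (3 + INR j) * (M + 1) ^ 2) * / q * Rpower (2 + L) (- q)) with
        (2 * C0 * (M+1)^2 * /q * (3 + INR j) * Rpower (2 + L) (- q)) by ring.
      rewrite <- Rmult_assoc. apply Rmult_le_compat_l; assumption.
    - unfold Rdiv. replace (8 * C0 * (M + 1) ^ 2 * / q * E) with (2 * C0 * (M+1)^2 * /q * (4 * E)) by ring.
      apply Rmult_le_compat_l; [|exact Hs4]. apply Rmult_le_pos; [|lra]. nra. }
  lra.
Qed.


Lemma inv_shift K x c : 0 <= K -> Rabs (c - x) <= 1 ->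
  K * / (3 + Rabs c)^2 <= 2 * K * / (3 + Rabs x)^2.
Proof.
  intros HK Hc.
  assert (H1 : 3 + Rabs x <= 4/3 * (3 + Rabs c)).
  { assert (Rabs x <= Rabs c + Rabs (c - x)).
    { replace x with (c - (c - x)) at 1 by ring.
      eapply Rle_trans; [apply Rabs_triang|]. rewrite Rabs_Ropp. lra. }
    pose proof (Rabs_pos c). lra. }
  pose proof (Rabs_pos c). pose proof (Rabs_pos x).
  assert (H2 : / (3 + Rabs c)^2 <= 2 * / (3 + Rabs x)^2).
  { apply Rmult_le_reg_r with ((3 + Rabs c)^2 * (3 + Rabs x)^2). nra.
    field_simplify; try nra. }
  rewrite Rmult_assoc. apply Rmult_le_compat_l with (r := K) in H2; [|lra]. lra.
Qed.

Lemma psi_mvt (Psi dPsi : R -> R -> R) v K :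
  0 <= K ->
  (forall x, derivable_pt_lim (fun y => Psi y v) x (dPsi x v)) ->
  (forall x, Rabs (dPsi x v) <= K * / (3 + Rabs x)^2) ->
  forall x1 x2, Rabs (x1 - x2) <= 1 ->
  Rabs (Psi x1 v - Psi x2 v) <= Rabs (x1 - x2) * (2 * K * / (3 + Rabs x1)^2).
Proof.
  intros HK Hd Hb x1 x2 H12.
  destruct (Rtotal_order x1 x2) as [h|[h|h]].
  - destruct (MVT_cor2 (fun y => Psi y v) (fun y => dPsi y v) x1 x2 h) as [c [Ec Hc]].
    { intros; apply Hd. }
    replace (Psi x1 v - Psi x2 v) with (- (dPsi c v * (x2 - x1))) by (simpl in Ec; lra).
    rewrite Rabs_Ropp, Rabs_mult, Rmult_comm. rewrite <- Rabs_Ropp. replace (- (x2 - x1)) with (x1 - x2) by ring.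
    apply Rmult_le_compat_l; [apply Rabs_pos|].
    eapply Rle_trans; [apply Hb|]. apply inv_shift; auto.
    rewrite Rabs_right by lra. rewrite Rabs_left in H12 by lra. lra.
  - subst. rewrite !Rminus_diag, Rabs_R0. lra.
  - destruct (MVT_cor2 (fun y => Psi y v) (fun y => dPsi y v) x2 x1 h) as [c [Ec Hc]].
    { intros; apply Hd. }
    replace (Psi x1 v - Psi x2 v) with (dPsi c v * (x1 - x2)) by (simpl in Ec; lra).
    rewrite Rabs_mult, Rmult_comm.
    apply Rmult_le_compat_l; [apply Rabs_pos|].
    eapply Rle_trans; [apply Hb|]. apply inv_shift; auto.
    rewrite Rabs_left by lra. rewrite Rabs_right in H12 by lra. lra.
Qed.


Lemma sum_gZ_plus f g N :
  sum_f_R0 (gZ (fun k => f k + g k)) N = sum_f_R0 (gZ f) N + sum_f_R0 (gZ g) N.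
Proof.
  induction N as [|N IH]; simpl; unfold gZ; simpl.
  - ring.
  - fold (gZ (fun k => f k + g k)). fold (gZ f). fold (gZ g). rewrite IH. ring.
Qed.

Lemma sum_le (f g : nat -> R) N : (forall n, f n <= g n) -> sum_f_R0 f N <= sum_f_R0 g N.
Proof. intros; apply sum_Rle; auto. Qed.

Lemma sum_gZ_minus f g N :
  sum_f_R0 (gZ (fun k => f k - g k)) N = sum_f_R0 (gZ f) N - sum_f_R0 (gZ g) N.
Proof.
  induction N as [|N IH]; simpl; unfold gZ; simpl.
  - ring.
  - fold (gZ (fun k => f k - g k)). fold (gZ f). fold (gZ g). rewrite IH. ring.
Qed.

Lemma sum_abs_gZ f N : Rabs (sum_f_R0 (gZ f) N) <= sum_f_R0 (gZ (fun k => Rabs (f k))) N.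
Proof.
  eapply Rle_trans; [apply sum_f_R0_triangle|]. apply sum_le. intro; apply gZ_abs.
Qed.

Lemma Rpower_1_base x : Rpower 1 x = 1.
Proof. unfold Rpower. rewrite ln_1, Rmult_0_r. apply exp_0. Qed.

Lemma series_diff (g1 g2 : nat -> R) l1 l2 :
  infinite_sum g1 l1 -> infinite_sum g2 l2 ->
  Un_cv (fun N => sum_f_R0 (fun n => g1 n - g2 n) N) (l1 - l2).
Proof.
  intros H1 H2. intros e He. destruct (CV_minus _ _ l1 l2 H1 H2 e He) as [N HN].
  exists N. intros n Hn. rewrite minus_sum. apply HN; auto.
Qed.


Lemma Rpower_le1 x c : 0 <= c -> 0 < x -> x <= 1 -> Rpower x c <= 1.
Proof.
  intros Hc Hx Hx1. unfold Rpower. rewrite <- exp_0. 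
  destruct (Req_dec c 0) as [->|h]. rewrite Rmult_0_l; lra.
  destruct (Req_dec x 1) as [->|h2]. rewrite ln_1, Rmult_0_r. lra.
  left. apply exp_increasing.
  assert (ln x < 0). { rewrite <- ln_1. apply ln_increasing; lra. }
  nra.
Qed.

Theorem mainTheorem6 (alpha : R) (Halpha : 1 < alpha < 2)
  (Psi dPsi : R -> R -> R) (HPsi : Psi_props alpha Psi dPsi)
  (eps : Z -> Z -> R)
  (H0 : Omega0_bound alpha eps) (H1 : Omega1_bound alpha eps)
  (M a b : R) (HM : 0 < M) (Hab : 1 / alpha < a /\ a < b /\ b < 1) :
  exists C : R,
    forall u1 u2 v : R,
      -M <= u1 <= M -> -M <= u2 <= M -> a <= v <= b ->
      exists x1 x2 : R,
        Xdd_is eps Psi u1 v x1 /\ Xdd_is eps Psi u2 v x2 /\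
        (u1 <> u2 ->
         Rabs (x1 - x2) / Rpower (Rabs (u1 - u2)) (v - 1 / alpha) <= C).
Proof.
  destruct HPsi as [Hder [_ Hbd]].
  destruct Hab as [Ha1 [Hab2 Hb1]].
  destruct (Hbd a b Ha1 (Rlt_le _ _ Hab2) Hb1) as [K HK].
  assert (PsiB : forall x v, a <= v <= b ->
     Rabs (Psi x v) <= K * / (3 + Rabs x)^2 /\ Rabs (dPsi x v) <= K * / (3 + Rabs x)^2).
  { intros x v Hv. specialize (HK x v Hv).
    pose proof (Rabs_pos x). pose proof (Rabs_pos (Psi x v)). pose proof (Rabs_pos (dPsi x v)).
    assert (Hp : 0 < (3 + Rabs x)^2) by nra.
    split; apply Rmult_le_reg_l with ((3 + Rabs x)^2); auto;
      rewrite <- Rmult_assoc, (Rmult_comm _ K), Rmult_assoc, Rinv_r by lra; nra. }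
  assert (HK0 : 0 <= K).
  { specialize (HK 0 a ltac:(lra)). pose proof (Rabs_pos (Psi 0 a)). pose proof (Rabs_pos (dPsi 0 a)).
    rewrite Rabs_R0 in HK. nra. }
  destruct (inner_bound alpha eps M Halpha H0 H1 HM) as [A [HA0 HA]].
  set (ia := 1 / alpha) in *.
  assert (Hal0 : alpha <> 0) by lra.
  assert (Hia0 : 0 < ia) by (unfold ia; apply Rdiv_lt_0_compat; lra).
  set (ca := a - ia). set (cb := b - ia).
  set (qm := Rpower 2 (- ca)). set (rm := Rpower 2 (1 - cb)).
  assert (Hqm : qm < 1).
  { unfold qm. rewrite <- (Rpower_O 2) by lra. apply Rpower_lt; unfold ca; lra. }
  assert (Hrm : 1 < rm).
  { unfold rm. rewrite <- (Rpower_O 2) at 1 by lra. apply Rpower_lt; unfold cb; lra. }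
  assert (Hia1 : ia < 1) by lra.
  exists (2 * K * A * (rm / (rm - 1) + 1 / (1 - qm))).
  intros u1 u2 v Hu1 Hu2 Hv.
  set (c0 := v - ia).
  assert (Hc0 : ca <= c0 <= cb) by (unfold ca, cb, c0; lra).
  assert (Hc0' : 0 < c0 < 1) by (unfold ca, cb in Hc0; lra).
  set (q := Rpower 2 (- c0)). set (r := Rpower 2 (1 - c0)).
  assert (Hq : 0 < q <= qm).
  { split. apply Rpower_pos. unfold q, qm. apply Rle_Rpower; lra. }
  assert (Hr : rm <= r).
  { unfold r, rm. apply Rle_Rpower; lra. }
  set (Zs := fun n : nat => Rpower 2 (- c0 * INR n)).
  assert (HZ0 : Zs 0%nat = 1) by (unfold Zs; simpl; rewrite Rmult_0_r; apply Rpower_O; lra).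
  assert (HZS : forall n, Zs (S n) = q * Zs n).
  { intro n. unfold Zs, q. rewrite <- Rpower_plus, S_INR. f_equal. ring. }
  assert (HZp : forall n, 0 <= Zs n) by (intro; left; apply Rpower_pos).
  assert (Hvr : ia < v < 1) by lra.
  assert (Hd : forall x, derivable_pt_lim (fun y => Psi y v) x (dPsi x v)).
  { intro x. apply Hder. unfold ia in Hvr. lra. }
  assert (I1 : forall j : nat, Rpower 2 (- (INR j) * v) * Rpower 2 (INR j / alpha) = Zs j).
  { intro j. unfold Zs. rewrite <- Rpower_plus. f_equal. unfold c0, ia. field. auto. }
  set (w := fun (j : nat) (y : R) (k : Z) => Rabs (eps (Z.of_nat j) k) / (3 + Rabs (y - IZR k)) ^ 2).
  set (s := fun u j => Series (gZ (inner_term eps Psi u v j))).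
  assert (Xcore : forall u, -M <= u <= M -> forall j : nat,
     infinite_sum (gZ (inner_term eps Psi u v j)) (s u j) /\ Rabs (s u j) <= 2 * K * A * Zs j).
  { intros u Hu j. unfold s.
    set (P := Rpower 2 (INR j)).
    assert (HP : 0 < P) by apply Rpower_pos.
    set (c := Rpower 2 (- (INR j) * v) * K).
    assert (Hc : 0 <= c) by (unfold c; pose proof (Rpower_pos 2 (- INR j * v)); nra).
    apply abs_conv with (d := gZ (fun k => c * (w j (P * u) k + w j 0 k))).
    - intro n. eapply Rle_trans; [apply gZ_abs|]. apply gZ_le. intro k.
      unfold inner_term, w, c. fold P.
      rewrite !Rabs_mult, (Rabs_right (Rpower 2 _)) by (left; apply Rpower_pos).
      rewrite Rmult_assoc. rewrite (Rmult_assoc (Rpower 2 _) K).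
      apply Rmult_le_compat_l; [left; apply Rpower_pos|].
      destruct (PsiB (P * u - IZR k) v Hv) as [B1 _]. destruct (PsiB (- IZR k) v Hv) as [B2 _].
      replace (0 - IZR k) with (- IZR k) by ring.
      assert (Rabs (Psi (P * u - IZR k) v - Psi (- IZR k) v) <= K * / (3 + Rabs (P * u - IZR k)) ^ 2 + K * / (3 + Rabs (- IZR k)) ^ 2).
      { unfold Rminus at 1. eapply Rle_trans; [apply Rabs_triang|]. rewrite Rabs_Ropp. lra. }
      pose proof (Rabs_pos (eps (Z.of_nat j) k)).
      unfold Rdiv. 
      replace (K * (Rabs (eps (Z.of_nat j) k) * / (3 + Rabs (P * u - IZR k)) ^ 2 + Rabs (eps (Z.of_nat j) k) * / (3 + Rabs (- IZR k)) ^ 2))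
        with (Rabs (eps (Z.of_nat j) k) * (K * / (3 + Rabs (P * u - IZR k)) ^ 2 + K * / (3 + Rabs (- IZR k)) ^ 2)) by ring.
      apply Rmult_le_compat_l; auto.
    - intro N. rewrite sum_gZ_scal, sum_gZ_plus.
      assert (Hy1 : Rabs (P * u) <= P * M).
      { rewrite Rabs_mult, (Rabs_right P) by lra. apply Rmult_le_compat_l; [lra|]. apply Rabs_le; lra. }
      assert (Hy2 : Rabs 0 <= P * M) by (rewrite Rabs_R0; nra).
      pose proof (HA j (P * u) Hy1 N). pose proof (HA j 0 Hy2 N).
      fold (w j (P * u)) in H. fold (w j 0) in H2.
      eapply Rle_trans. apply Rmult_le_compat_l; [exact Hc|]. apply Rplus_le_compat; eassumption.
      rewrite <- (I1 j). unfold c. 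
      assert (0 <= Rpower 2 (INR j / alpha)) by (left; apply Rpower_pos).
      right. ring. }
  assert (Xfull : forall u, -M <= u <= M -> infinite_sum (s u) (Series (s u))).
  { intros u Hu. apply (abs_conv (s u) (fun j => 2 * K * A * Zs j) (2 * K * A * (2 / (1 - q)))).
    - intro j. apply (Xcore u Hu j).
    - intro N. rewrite sum_scal. apply Rmult_le_compat_l; [nra|].
      pose proof (G2 Zs q 2 (fun _ => true) ltac:(lra) HZ0 HZS HZp) as G.
      simpl in G. apply G; [|lra]. intros n _. 
      assert (Zs n <= 1).
      { unfold Zs. rewrite <- (Rpower_O 2) by lra. apply Rle_Rpower; [lra|].
        pose proof (pos_INR n). nra. }
      lra. }
  exists (Series (s u1)), (Series (s u2)).
  split; [exists (s u1); split; [intro j; apply (Xcore u1 Hu1 j)|apply Xfull; auto]|].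
  split; [exists (s u2); split; [intro j; apply (Xcore u2 Hu2 j)|apply Xfull; auto]|].
  intro Hneq.
  set (dl := Rabs (u1 - u2)).
  assert (Hdl : 0 < dl) by (apply Rabs_pos_lt; lra).
  set (c1 := fun j : nat => if Rle_dec (Rpower 2 (INR j) * dl) 1 then true else false).
  set (Rs := fun n : nat => dl * Rpower 2 (INR n * (1 - c0))).
  set (Y := Rpower dl c0).
  assert (HY : 0 < Y) by apply Rpower_pos.
  assert (Dbound : forall j : nat, Rabs (s u1 j - s u2 j) <=
     2 * K * A * ((if c1 j then Rs j else 0) + (if negb (c1 j) then Zs j else 0))).
  { intro j. destruct (Xcore u1 Hu1 j) as [S1 _]. destruct (Xcore u2 Hu2 j) as [S2 _].
    set (t1 := inner_term eps Psi u1 v j). set (t2 := inner_term eps Psi u2 v j).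
    apply (lim_abs_le (fun N => sum_f_R0 (gZ (fun k => t1 k - t2 k)) N)).
    { intros e He. destruct (series_diff _ _ _ _ S1 S2 e He) as [N HN].
      exists N. intros n Hn. rewrite sum_gZ_minus. rewrite <- minus_sum. apply HN; auto. }
    intro N. eapply Rle_trans; [apply sum_abs_gZ|].
    set (P := Rpower 2 (INR j)).
    assert (HP : 0 < P) by apply Rpower_pos.
    set (Rj := Rpower 2 (- (INR j) * v)).
    assert (HRj : 0 < Rj) by apply Rpower_pos.
    assert (Et : forall k, t1 k - t2 k = Rj * eps (Z.of_nat j) k *
                  (Psi (P * u1 - IZR k) v - Psi (P * u2 - IZR k) v)).
    { intro k. unfold t1, t2, inner_term. fold P Rj. ring. }
    assert (Hy1 : Rabs (P * u1) <= P * M).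
    { rewrite Rabs_mult, (Rabs_right P) by lra. apply Rmult_le_compat_l; [lra|]. apply Rabs_le; lra. }
    assert (Hy2 : Rabs (P * u2) <= P * M).
    { rewrite Rabs_mult, (Rabs_right P) by lra. apply Rmult_le_compat_l; [lra|]. apply Rabs_le; lra. }
    pose proof (HA j (P * u1) Hy1 N) as A1. pose proof (HA j (P * u2) Hy2 N) as A2.
    fold (w j (P * u1)) in A1. fold (w j (P * u2)) in A2.
    assert (HE := I1 j). fold Rj in HE.
    unfold c1; cbv beta; fold P. destruct (Rle_dec (P * dl) 1) as [hs|hs]; simpl.
    -
      set (cc := Rj * (P * dl * (2 * K))).
      assert (Hcc : 0 <= cc) by (unfold cc; apply Rmult_le_pos; [lra|]; apply Rmult_le_pos; nra).
      apply Rle_trans with (sum_f_R0 (gZ (fun k => cc * w j (P * u1) k)) N).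
      { apply sum_le. apply gZ_le. intro k. rewrite Et.
        assert (Hx : Rabs ((P * u1 - IZR k) - (P * u2 - IZR k)) = P * dl).
        { replace ((P * u1 - IZR k) - (P * u2 - IZR k)) with (P * (u1 - u2)) by ring.
          rewrite Rabs_mult, Rabs_right by lra. reflexivity. }
        pose proof (psi_mvt Psi dPsi v K HK0 Hd (fun x => proj2 (PsiB x v Hv))
                      (P * u1 - IZR k) (P * u2 - IZR k) ltac:(lra)) as Hm.
        rewrite Hx in Hm.
        rewrite !Rabs_mult, (Rabs_right Rj) by lra.
        unfold cc, w. unfold Rdiv.
        pose proof (Rabs_pos (eps (Z.of_nat j) k)).
        replace (Rj * (P * dl * (2 * K)) * (Rabs (eps (Z.of_nat j) k) * / (3 + Rabs (P * u1 - IZR k)) ^ 2))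
          with (Rj * Rabs (eps (Z.of_nat j) k) * (P * dl * (2 * K * / (3 + Rabs (P * u1 - IZR k)) ^ 2))) by ring.
        apply Rmult_le_compat_l; [nra|exact Hm]. }
      rewrite sum_gZ_scal, Rplus_0_r.
      eapply Rle_trans. apply Rmult_le_compat_l; [exact Hcc|exact A1].
      right. unfold cc, Rs.
      replace (INR j * (1 - c0)) with (INR j + (- INR j * v + INR j / alpha)) by (unfold c0, ia; field; auto).
      rewrite !Rpower_plus. fold P Rj. ring.
    -
      set (cc := Rj * K).
      assert (Hcc : 0 <= cc) by (unfold cc; nra).
      apply Rle_trans with (sum_f_R0 (gZ (fun k => cc * (w j (P * u1) k + w j (P * u2) k))) N).
      { apply sum_le. apply gZ_le. intro k. rewrite Et.
        destruct (PsiB (P * u1 - IZR k) v Hv) as [B1 _]. destruct (PsiB (P * u2 - IZR k) v Hv) as [B2 _].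
        assert (Rabs (Psi (P * u1 - IZR k) v - Psi (P * u2 - IZR k) v) <= K * / (3 + Rabs (P * u1 - IZR k)) ^ 2 + K * / (3 + Rabs (P * u2 - IZR k)) ^ 2).
        { unfold Rminus at 1. eapply Rle_trans; [apply Rabs_triang|]. rewrite Rabs_Ropp. lra. }
        rewrite !Rabs_mult, (Rabs_right Rj) by lra.
        unfold cc, w. unfold Rdiv.
        pose proof (Rabs_pos (eps (Z.of_nat j) k)).
        replace (Rj * K * (Rabs (eps (Z.of_nat j) k) * / (3 + Rabs (P * u1 - IZR k)) ^ 2 + Rabs (eps (Z.of_nat j) k) * / (3 + Rabs (P * u2 - IZR k)) ^ 2))
          with (Rj * Rabs (eps (Z.of_nat j) k) * (K * / (3 + Rabs (P * u1 - IZR k)) ^ 2 + K * / (3 + Rabs (P * u2 - IZR k)) ^ 2)) by ring.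
        apply Rmult_le_compat_l; [nra|auto]. }
      rewrite sum_gZ_scal, sum_gZ_plus, Rplus_0_l.
      eapply Rle_trans. apply Rmult_le_compat_l; [exact Hcc|]. apply Rplus_le_compat; [exact A1|exact A2].
      right. unfold cc. rewrite <- HE. ring. }
  assert (Hr1 : 1 < r) by lra.
  assert (Hq1 : q < 1) by lra.
  assert (HRsS : forall n, Rs (S n) = r * Rs n).
  { intro n. unfold Rs, r. rewrite S_INR.
    replace ((INR n + 1) * (1 - c0)) with ((1 - c0) + INR n * (1 - c0)) by ring.
    rewrite Rpower_plus. ring. }
  assert (HRsp : forall n, 0 <= Rs n) by (intro; unfold Rs; pose proof (Rpower_pos 2 (INR n * (1 - c0))); nra).
  assert (Hc1 : forall n, c1 n = true -> Rs n <= Y).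
  { intros n Hn. unfold c1 in Hn. destruct (Rle_dec (Rpower 2 (INR n) * dl) 1) as [h|h]; [|discriminate].
    unfold Rs, Y. rewrite <- Rpower_mult.
    set (P := Rpower 2 (INR n)). assert (HP0 : 0 < P) by apply Rpower_pos.
    assert (Edl : dl = Rpower dl c0 * Rpower dl (1 - c0)).
    { rewrite <- Rpower_plus. replace (c0 + (1 - c0)) with 1 by ring. rewrite Rpower_1; lra. }
    assert (Hle : Rpower (dl * P) (1 - c0) <= 1).
    { apply Rpower_le1; [lra|apply Rmult_lt_0_compat; lra|]. fold P in h. rewrite Rmult_comm. exact h. }
    rewrite Edl at 1. rewrite Rmult_assoc, Rpower_mult_distr by lra.
    pose proof (Rpower_pos dl c0). pose proof (Rpower_pos (dl * P) (1 - c0)). nra. }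
  assert (Hc2 : forall n, negb (c1 n) = true -> Zs n < Y).
  { intros n Hn. unfold c1 in Hn. destruct (Rle_dec (Rpower 2 (INR n) * dl) 1) as [h|h]; [discriminate|].
    apply Rnot_le_lt in h.
    unfold Zs, Y. replace (- c0 * INR n) with (- (INR n * c0)) by ring. rewrite Rpower_Ropp, <- Rpower_mult.
    assert (HP0 : 0 < Rpower 2 (INR n)) by apply Rpower_pos.
    assert (1 < Rpower (Rpower 2 (INR n)) c0 * Rpower dl c0).
    { rewrite Rpower_mult_distr by lra. pose proof (Rpower_1_base c0) as E1. rewrite <- E1 at 1. apply Rlt_Rpower_l; lra. }
    pose proof (Rpower_pos (Rpower 2 (INR n)) c0).
    apply Rmult_lt_reg_l with (Rpower (Rpower 2 (INR n)) c0); auto.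
    rewrite Rinv_r by lra. lra. }
  assert (Htot : Rabs (Series (s u1) - Series (s u2)) <=
                 2 * K * A * (Y * (r / (r - 1)) + Y / (1 - q))).
  { apply (lim_abs_le (fun N => sum_f_R0 (fun j => s u1 j - s u2 j) N)).
    { apply series_diff; apply Xfull; auto. }
    intro N. eapply Rle_trans; [apply sum_f_R0_triangle|].
    eapply Rle_trans; [apply sum_le; intro j; apply Dbound|].
    rewrite sum_scal, plus_sum. apply Rmult_le_compat_l; [nra|].
    apply Rplus_le_compat.
    - apply (G1 Rs r Y c1); auto; lra.
    - apply (G2 Zs q Y (fun n => negb (c1 n))); auto; lra. }
  fold dl. fold Y. fold ia in Htot |- *. fold c0. 
  apply Rmult_le_reg_r with Y; auto. unfold Rdiv at 1. rewrite Rmult_assoc, Rinv_l by lra. rewrite Rmult_1_r.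
  eapply Rle_trans; [exact Htot|].
  assert (Hb1' : r / (r - 1) <= rm / (rm - 1)).
  { replace (r / (r-1)) with (1 + / (r - 1)) by (field; lra).
    replace (rm / (rm-1)) with (1 + / (rm - 1)) by (field; lra).
    apply Rplus_le_compat_l. apply Rinv_le_contravar; lra. }
  assert (Hb2' : 1 / (1 - q) <= 1 / (1 - qm)).
  { unfold Rdiv. rewrite !Rmult_1_l. apply Rinv_le_contravar; lra. }
  replace (2 * K * A * (Y * (r / (r - 1)) + Y / (1 - q))) with (2 * K * A * Y * (r / (r - 1) + 1 / (1 - q))) by (field; lra).
  replace (2 * K * A * (rm / (rm - 1) + 1 / (1 - qm)) * Y) with (2 * K * A * Y * (rm / (rm - 1) + 1 / (1 - qm))) by ring.
  apply Rmult_le_compat_l; [|lra].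
  apply Rmult_le_pos; [nra|lra].
Qed.
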